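(* For $n\geq 2$ let $G_n=P_n\rtimes\mathcal{E}^n_\Delta$ denote the centralizer of $r_{1/n}$ in $\mathcal{E}$, and let $G_1=\mathcal{E}$. If $f\in\mathcal{E}$ has finite order, then $C(f)$ is isomorphic to a finite direct product of groups $G_i$.
   Context: Identify $\mathbb{T}^1=\mathbb{R}/\mathbb{Z}$ with $[0,1)$. An interval exchange transformation is a bijection of $\mathbb{T}^1$ that is a translation on each piece of some partition of $[0,1)$ into finitely many half-open intervals $[a,b)$; $\mathcal{E}$ is the group of these, and $C(g)=\{h\in\mathcal{E}:gh=hg\}$. $r_{1/n}(x)=x+1/n$. With $I_i=[\frac{i-1}{n},\frac in)$: $\mathcal{E}^n_\Delta=\{g\in C(r_{1/n}): g(I_i)=I_i\ \forall i\}$ and $P_n=\{g\in C(r_{1/n}):\forall x\in\mathbb{T}^1\ \exists k\in\mathbb{Z},\ g(x)=x+k/n \bmod 1\}$; $C(r_{1/n})=P_n\rtimes\mathcal{E}^n_\Delta$. *)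

(* Defs.v *)
From Stdlib Require Import Reals Lra Arith.
Open Scope R_scope.

(* The circle T^1 = R/Z, identified with [0,1). *)
Definition T1 : Type := {x : R | 0 <= x < 1}.

Lemma frac_in (x : R) : 0 <= frac_part x < 1.
Proof. destruct (base_fp x) as [H1 H2]; lra. Qed.

Definition toT1 (x : R) : T1 := exist _ (frac_part x) (frac_in x).

Definition is_iet (f : T1 -> T1) : Prop :=
  (exists g : T1 -> T1, (forall x, g (f x) = x) /\ (forall x, f (g x) = x)) /\
  exists (k : nat) (a t : nat -> R),
    a 0%nat = 0 /\ a k = 1 /\
    (forall i, (i < k)%nat -> a i < a (S i)) /\
    (forall (x : T1) i, (i < k)%nat -> a i <= proj1_sig x < a (S i) ->
        f x = toT1 (proj1_sig x + t i)).

Definition centralizer (f h : T1 -> T1) : Prop :=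
  is_iet h /\ forall x, f (h x) = h (f x).

Definition rot (n : nat) : T1 -> T1 := fun x => toT1 (proj1_sig x + / INR n).

Definition G (n : nat) (h : T1 -> T1) : Prop :=
  if Nat.eqb n 1 then is_iet h else centralizer (rot n) h.

Definition finite_order (f : T1 -> T1) : Prop :=
  exists m : nat, (0 < m)%nat /\ forall x, Nat.iter m f x = x.

(* Main.v *)
Require Import Defs.
From Stdlib Require Import Reals Lra Lia Arith List ClassicalEpsilon FunctionalExtensionality ProofIrrelevance.
Open Scope R_scope.
Open Scope R_scope.

Definition v (p : T1) : R := proj1_sig p.
Lemma v_range p : 0 <= v p < 1.
Proof. destruct p; simpl; auto. Qed.

Lemma Int_part_eq (z : R) (n : Z) : IZR n <= z < IZR n + 1 -> Int_part z = n.
Proof.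
  intros [H1 H2]. unfold Int_part.
  assert (up z = (n+1)%Z).
  { symmetry; apply tech_up; rewrite plus_IZR; simpl; lra. }
  rewrite H; ring.
Qed.

Lemma frac_eq (z : R) (n : Z) : IZR n <= z < IZR n + 1 -> frac_part z = z - IZR n.
Proof. intros H; unfold frac_part; rewrite (Int_part_eq z n H); auto. Qed.

Lemma frac_id x : 0 <= x < 1 -> frac_part x = x.
Proof. intros H. rewrite (frac_eq x 0); simpl; lra. Qed.

Lemma toT1_v p : toT1 (v p) = p.
Proof.
  destruct p as [x Hx]; unfold toT1, v; simpl.
  generalize (frac_in x). rewrite (frac_id x Hx). intros H.
  f_equal. apply proof_irrelevance.
Qed.

Lemma v_toT1 x : 0 <= x < 1 -> v (toT1 x) = x.
Proof. intros H; unfold v, toT1; simpl; apply frac_id; auto. Qed.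

Lemma v_inj p q : v p = v q -> p = q.
Proof. intros H; rewrite <- (toT1_v p), <- (toT1_v q), H; auto. Qed.

Definition lift (h : T1 -> T1) (x : R) : R := v (h (toT1 x)).

Lemma lift_range h x : 0 <= lift h x < 1.
Proof. apply v_range. Qed.

Lemma lift_v h p : lift h (v p) = v (h p).
Proof. unfold lift; rewrite toT1_v; auto. Qed.

Lemma lift_comp h1 h2 x : 0 <= x < 1 -> lift (fun y => h1 (h2 y)) x = lift h1 (lift h2 x).
Proof. intros H. unfold lift at 1 3. unfold lift. rewrite toT1_v. auto. Qed.

Lemma fun_ext_lift (h1 h2 : T1 -> T1) : (forall x, 0 <= x < 1 -> lift h1 x = lift h2 x) -> h1 = h2.
Proof.
  intros H; apply functional_extensionality; intros p.
  apply v_inj. rewrite <- !lift_v. apply H, v_range.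
Qed.

Definition incr (K : nat) (a : nat -> R) := forall i, (i < K)%nat -> a i < a (S i).

Lemma incr_lt K a : incr K a -> forall i j, (i < j)%nat -> (j <= K)%nat -> a i < a j.
Proof.
  intros H i j Hij. induction Hij; intros HK.
  - apply H; lia.
  - apply Rlt_trans with (a m). apply IHHij; lia. apply H; lia.
Qed.

Lemma incr_le K a : incr K a -> forall i j, (i <= j)%nat -> (j <= K)%nat -> a i <= a j.
Proof.
  intros H i j Hij HK. destruct (Nat.eq_dec i j). subst; lra.
  left; apply (incr_lt K); auto; lia.
Qed.

Lemma incr_inj K a : incr K a -> forall i j, (i <= K)%nat -> (j <= K)%nat -> a i = a j -> i = j.
Proof.
  intros H i j Hi Hj E. destruct (lt_eq_lt_dec i j) as [[?|?]|?]; auto.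
  - pose proof (incr_lt K a H i j ltac:(lia) ltac:(lia)); lra.
  - pose proof (incr_lt K a H j i ltac:(lia) ltac:(lia)); lra.
Qed.

Lemma cover K a : incr K a -> forall x, a 0%nat <= x < a K -> exists i, (i < K)%nat /\ a i <= x < a (S i).
Proof.
  induction K; intros H x Hx. lra.
  destruct (Rlt_dec x (a K)).
  - destruct (IHK (fun i Hi => H i ltac:(lia)) x ltac:(lra)) as [i [? ?]]. exists i; split; auto; lia.
  - exists K; split; [lia|lra].
Qed.

Lemma cell_unique K a : incr K a -> forall i j x, (i < K)%nat -> (j < K)%nat ->
  a i <= x < a (S i) -> a j <= x < a (S j) -> i = j.
Proof.
  intros H i j x Hi Hj Hx1 Hx2. destruct (lt_eq_lt_dec i j) as [[?|?]|?]; auto.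
  - pose proof (incr_le K a H (S i) j ltac:(lia) ltac:(lia)); lra.
  - pose proof (incr_le K a H (S j) i ltac:(lia) ltac:(lia)); lra.
Qed.

Lemma partition_of (l : list R) : (forall x, In x l -> 0 <= x < 1) ->
  exists K (a : nat -> R), (0 < K)%nat /\ a 0%nat = 0 /\ a K = 1 /\ incr K a /\
   (forall i, (i < K)%nat -> a i = 0 \/ In (a i) l) /\
   (forall x, In x l -> exists i, (i < K)%nat /\ a i = x).
Proof.
  induction l as [|y l IH]; intros Hl.
  - exists 1%nat, (fun i => if Nat.eqb i 0 then 0 else 1). repeat split; auto.
    + intros i Hi; replace i with 0%nat by lia; simpl; lra.
    + intros i Hi; replace i with 0%nat by lia; simpl; auto.
    + intros x [].
  - destruct IH as [K [a [HK [H0 [H1 [Hinc [Hin Hall]]]]]]]. intros; apply Hl; simpl; auto.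
    assert (Hy : 0 <= y < 1) by (apply Hl; simpl; auto).
    destruct (cover K a Hinc y ltac:(lra)) as [i [Hi Hyi]].
    destruct (Req_dec (a i) y) as [E|NE].
    + exists K, a. repeat split; auto.
      * intros j Hj; destruct (Hin j Hj); auto; right; simpl; auto.
      * intros x [<-|Hx]. exists i; auto. apply Hall; auto.
    + set (b := fun j => if Nat.leb j i then a j else if Nat.eqb j (S i) then y else a (pred j)).
      exists (S K), b. unfold b. repeat split.
      * lia.
      * simpl; auto.
      * destruct (Nat.leb_spec (S K) i); [lia|]. destruct (Nat.eqb_spec (S K) (S i)). 
        -- assert (K = i) by lia; lia.
        -- simpl; auto.
      * intros j Hj. destruct (Nat.leb_spec j i); destruct (Nat.leb_spec (S j) i).
        -- apply Hinc; lia.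
        -- destruct (Nat.eqb_spec (S j) (S i)); [|lia]. replace j with i by lia; lra.
        -- lia.
        -- destruct (Nat.eqb_spec j (S i)); destruct (Nat.eqb_spec (S j) (S i)); try lia.
           ++ subst j. simpl. lra.
           ++ simpl. replace j with (S (pred j)) at 2 by lia. apply Hinc. lia.
      * intros j Hj. destruct (Nat.leb_spec j i).
        -- destruct (Hin j ltac:(lia)); auto; right; simpl; auto.
        -- destruct (Nat.eqb_spec j (S i)). right; simpl; auto.
           destruct (Hin (pred j) ltac:(lia)); auto; right; simpl; auto.
      * intros x [<-|Hx].
        -- exists (S i); split; [lia|]. destruct (Nat.leb_spec (S i) i); [lia|]. rewrite Nat.eqb_refl; auto.
        -- destruct (Hall x Hx) as [j [Hj <-]].
           destruct (le_lt_dec j i).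
           ++ exists j; split; [lia|]. destruct (Nat.leb_spec j i); [auto|lia].
           ++ exists (S j); split; [lia|]. destruct (Nat.leb_spec (S j) i); [lia|].
              destruct (Nat.eqb_spec (S j) (S i)); [lia|]. simpl; auto.
Qed.
Open Scope R_scope.

Definition nobk (L : list R) (x y : R) := forall b, In b L -> ~ (x < b <= y).
Definition PAI (s : R) (L : list R) (c e : R) (F : R -> R) :=
  forall x y, c <= x -> x <= y -> y < e -> nobk L x y -> F y - F x = s * (y - x).

Lemma nobk_app L M x y : nobk (L ++ M) x y <-> nobk L x y /\ nobk M x y.
Proof.
  unfold nobk; split.
  - intros H; split; intros b Hb; apply H; apply in_or_app; auto.
  - intros [H1 H2] b Hb; apply in_app_or in Hb; destruct Hb; auto.
Qed.

Lemma nobk_sub L x y x' y' : nobk L x y -> x <= x' -> y' <= y -> nobk L x' y'.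
Proof. intros H Hx Hy b Hb [? ?]; apply (H b Hb); lra. Qed.

Lemma base_int z : IZR (Int_part z) <= z < IZR (Int_part z) + 1.
Proof. destruct (base_Int_part z); lra. Qed.

Lemma iet_PA f : is_iet f -> exists L, PAI 1 L 0 1 (lift f).
Proof.
  intros [_ [k [a [t [H0 [Hk [Hinc Hf]]]]]]].
  set (w := fun i => IZR (Int_part (a i + t i)) + 1 - t i).
  exists (map a (seq 0 (S k)) ++ map w (seq 0 k)).
  intros x y Hx Hxy Hy Hb. apply nobk_app in Hb as [Ha Hw].
  destruct (cover k a Hinc x ltac:(lra)) as [i [Hi Hxi]].
  assert (Hyi : y < a (S i)).
  { destruct (Rlt_dec y (a (S i))); auto. exfalso; apply (Ha (a (S i))).
    apply in_map, in_seq; lia. lra. }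
  assert (Hai : 0 <= a i) by (rewrite <- H0; apply (incr_le k a Hinc); lia).
  assert (Hai1 : a (S i) <= 1) by (rewrite <- Hk; apply (incr_le k a Hinc); lia).
  assert (Fx : lift f x = frac_part (x + t i)).
  { unfold lift. assert (E : f (toT1 x) = toT1 (v (toT1 x) + t i)) by (apply Hf; auto; rewrite v_toT1; lra).
    rewrite E, (v_toT1 x) by lra. reflexivity. }
  assert (Fy : lift f y = frac_part (y + t i)).
  { unfold lift. assert (E : f (toT1 y) = toT1 (v (toT1 y) + t i)) by (apply Hf; auto; rewrite v_toT1; lra).
    rewrite E, (v_toT1 y) by lra. reflexivity. }
  rewrite Fx, Fy.
  pose proof (base_int (a i + t i)) as Bn. set (n := Int_part (a i + t i)) in *.
  destruct (Rlt_dec (y + t i) (IZR n + 1)).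
  - rewrite (frac_eq _ n), (frac_eq _ n); lra.
  - destruct (Rle_dec (IZR n + 1) (x + t i)).
    + rewrite (frac_eq _ (n+1)), (frac_eq _ (n+1)); rewrite ?plus_IZR; simpl; lra.
    + exfalso. apply (Hw (w i)). apply in_map, in_seq; lia. unfold w; fold n; lra.
Qed.

Definition Rin01 (b : R) : bool := if Rle_dec 0 b then if Rlt_dec b 1 then true else false else false.

Lemma Rin01_spec b : Rin01 b = true <-> 0 <= b < 1.
Proof.
  unfold Rin01; destruct (Rle_dec 0 b); destruct (Rlt_dec b 1); split; intros; try lra; try discriminate; auto.
Qed.

Lemma PA_iet f : (exists g : T1 -> T1, (forall x, g (f x) = x) /\ (forall x, f (g x) = x)) ->
  forall L, PAI 1 L 0 1 (lift f) -> is_iet f.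
Proof.
  intros Hbij L HL. split; auto.
  destruct (partition_of (filter Rin01 L)) as [K [a [HK [H0 [H1 [Hinc [Hin Hall]]]]]]].
  { intros x Hx. apply filter_In in Hx as [_ Hx]. apply Rin01_spec; auto. }
  exists K, a, (fun i => lift f (a i) - a i). repeat split; auto.
  intros p i Hi Hp. change (a i <= v p < a (S i)) in Hp.
  assert (Hai : 0 <= a i) by (rewrite <- H0; apply (incr_le K a Hinc); lia).
  assert (Hnb : nobk L (a i) (v p)).
  { intros b Hb [Hb1 Hb2]. pose proof (v_range p).
    assert (Hbl : In b (filter Rin01 L)) by (apply filter_In; split; auto; apply Rin01_spec; lra).
    destruct (Hall b Hbl) as [j [Hj Ej]].
    subst b. destruct (le_lt_dec j i).
    - pose proof (incr_le K a Hinc j i l ltac:(lia)); lra.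
    - pose proof (incr_le K a Hinc (S i) j ltac:(lia) ltac:(lia)); lra. }
  pose proof (v_range p).
  pose proof (HL (a i) (v p) Hai ltac:(lra) ltac:(lra) Hnb).
  rewrite <- (toT1_v (f p)), <- lift_v. f_equal. cbv beta. change (proj1_sig p) with (v p). lra.
Qed.
Open Scope R_scope.

Lemma PA_comp s t L M c e c' e' G H Ginv : 0 < s -> PAI s L c e G ->
  (forall x, c <= x < e -> c' <= G x < e') -> PAI t M c' e' H ->
  (forall z, c <= z < e -> Ginv (G z) = z) ->
  PAI (s * t) (L ++ map Ginv M) c e (fun x => H (G x)).
Proof.
  intros Hs HG Hr HH Hinv x y Hx Hxy Hy Hb. apply nobk_app in Hb as [HbL HbM].
  pose proof (HG x y Hx Hxy Hy HbL) as E.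
  pose proof (Hr x ltac:(lra)) as Rx. pose proof (Hr y ltac:(lra)) as Ry.
  assert (Hpos : 0 <= s * (y - x)) by (apply Rmult_le_pos; lra).
  assert (Hnb : nobk M (G x) (G y)).
  { intros b Hb [Hb1 Hb2].
    set (z := x + (b - G x) / s).
    assert (Hz1 : x < z).
    { unfold z. assert (0 < (b - G x) / s) by (apply Rdiv_lt_0_compat; lra). lra. }
    assert (Hz2 : z <= y).
    { unfold z. assert ((b - G x) / s <= y - x).
      { apply (Rmult_le_reg_r s); auto. unfold Rdiv; rewrite Rmult_assoc, Rinv_l by lra. lra. }
      lra. }
    assert (Gz : G z = b).
    { pose proof (HG x z Hx ltac:(lra) ltac:(lra) (nobk_sub L x y x z HbL ltac:(lra) ltac:(lra))) as H0.
      unfold z in *. replace (x + (b - G x) / s - x) with ((b - G x) / s) in H0 by ring.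
      replace (s * ((b - G x) / s)) with (b - G x) in H0 by (field; lra).
      lra. }
    apply (HbM (Ginv b)). apply in_map; auto. rewrite <- Gz, Hinv by lra. lra. }
  rewrite (HH (G x) (G y)); try lra; auto.
  rewrite E. ring.
Qed.

Lemma PA_mono s L L' c e F : PAI s L c e F -> (forall b, In b L -> In b L') -> PAI s L' c e F.
Proof. intros H Hs x y ? ? ? Hb; apply H; auto. intros b Hbb; apply Hb; auto. Qed.

Lemma PA_sub s L c e c' e' F : PAI s L c e F -> c <= c' -> e' <= e -> PAI s L c' e' F.
Proof. intros H ? ? x y ? ? ? Hb; apply H; auto; lra. Qed.

Lemma PA_ext s L c e F F' : PAI s L c e F -> (forall x, c <= x < e -> F x = F' x) -> PAI s L c e F'.
Proof. intros H He x y ? ? ? Hb. rewrite <- !He by lra. apply H; auto. Qed.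

Lemma between_false K a i k x : incr K a -> (i < K)%nat -> (k <= K)%nat ->
  a i < a k -> a k <= x -> x < a (S i) -> False.
Proof.
  intros Hinc Hi Hk H1 H2 H3. destruct (le_lt_dec k i).
  - pose proof (incr_le K a Hinc k i l ltac:(lia)); lra.
  - pose proof (incr_le K a Hinc (S i) k ltac:(lia) ltac:(lia)); lra.
Qed.

Lemma PA_glue s K a (Ls : nat -> list R) F : incr K a ->
  (forall i, (i < K)%nat -> PAI s (Ls i) (a i) (a (S i)) F) ->
  PAI s (map a (seq 0 (S K)) ++ flat_map Ls (seq 0 K)) (a 0%nat) (a K) F.
Proof.
  intros Hinc HL x y Hx Hxy Hy Hb. apply nobk_app in Hb as [Ha HLs].
  destruct (cover K a Hinc x ltac:(lra)) as [i [Hi Hxi]].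
  assert (y < a (S i)).
  { destruct (Rlt_dec y (a (S i))); auto. exfalso; apply (Ha (a (S i))).
    apply in_map, in_seq; lia. lra. }
  apply (HL i Hi); try lra.
  intros b Hb; apply HLs. apply in_flat_map. exists i; split; auto. apply in_seq; lia.
Qed.
Open Scope R_scope.

Lemma iter_lift f j p : v (Nat.iter j f p) = Nat.iter j (lift f) (v p).
Proof. induction j; simpl; auto. rewrite <- IHj, lift_v; auto. Qed.

Lemma iter_lift_range f j x : 0 <= x < 1 -> 0 <= Nat.iter j (lift f) x < 1.
Proof. intros H; destruct j; simpl; auto. apply lift_range. Qed.

Lemma iter_succ_r {A} (g : A -> A) j x : Nat.iter (S j) g x = Nat.iter j g (g x).
Proof. induction j; simpl; auto. simpl in IHj; rewrite IHj; auto. Qed.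

Lemma iter_add {A} (g : A -> A) i j x : Nat.iter (i + j) g x = Nat.iter i g (Nat.iter j g x).
Proof. induction i; simpl; auto. rewrite IHi; auto. Qed.

Definition cellstr (F : R -> R) (K : nat) (a : nat -> R) (sg : nat -> nat) (m : nat) :=
  (0 < K)%nat /\ a 0%nat = 0 /\ a K = 1 /\ incr K a /\ (0 < m)%nat /\
  (forall i, (i < K)%nat -> (sg i < K)%nat) /\
  (forall i, (i < K)%nat -> a (S i) - a i = a (S (sg i)) - a (sg i)) /\
  (forall i x, (i < K)%nat -> a i <= x < a (S i) -> F x = x - a i + a (sg i)) /\
  (forall i, (i < K)%nat -> Nat.iter m sg i = i).

Lemma cell_structure f : is_iet f -> finite_order f ->
  exists K a sg m, cellstr (lift f) K a sg m.
Proof.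
  intros Hf [m [Hm Hfm]].
  set (F := lift f).
  assert (HFm : forall x, 0 <= x < 1 -> Nat.iter m F x = x).
  { intros x Hx. rewrite <- (v_toT1 x Hx) at 1. unfold F; rewrite <- iter_lift, Hfm. apply v_toT1; auto. }
  destruct (iet_PA f Hf) as [L HL]. fold F in HL.
  set (seeds := 0 :: filter Rin01 L).
  set (B := flat_map (fun b => map (fun j => Nat.iter j F b) (seq 0 m)) seeds).
  assert (Hseed : forall b, In b seeds -> 0 <= b < 1).
  { intros b [<-|Hb]. lra. apply filter_In in Hb as [_ Hb]; apply Rin01_spec; auto. }
  assert (HB : forall x, In x B <-> exists b j, In b seeds /\ (j < m)%nat /\ x = Nat.iter j F b).
  { intros x; unfold B; rewrite in_flat_map; split.
    - intros [b [Hb Hx]]. apply in_map_iff in Hx as [j [<- Hj]]. apply in_seq in Hj.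
      exists b, j; repeat split; auto; lia.
    - intros [b [j [Hb [Hj ->]]]]. exists b; split; auto. apply in_map_iff; exists j; split; auto; apply in_seq; lia. }
  assert (HBr : forall x, In x B -> 0 <= x < 1).
  { intros x Hx; apply HB in Hx as [b [j [Hb [_ ->]]]]. apply iter_lift_range, Hseed; auto. }
  assert (HBF : forall x, In x B -> In (F x) B).
  { intros x Hx; apply HB in Hx as [b [j [Hb [Hj ->]]]]. apply HB.
    destruct (Nat.eq_dec (S j) m).
    - exists b, 0%nat; split; [auto|split; [lia|]]. simpl.
      change (F (Nat.iter j F b)) with (Nat.iter (S j) F b). rewrite e. apply HFm; auto.
    - exists b, (S j); repeat split; auto; lia. }
  assert (HBFj : forall j x, In x B -> In (Nat.iter j F x) B).
  { induction j; intros x Hx; simpl; auto. }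
  assert (H0B : In 0 B). { apply HB; exists 0, 0%nat; split; [left; auto|split; [lia|simpl; auto]]. }
  destruct (partition_of B HBr) as [K [a [HK [H0 [H1 [Hinc [Hin Hall]]]]]]].
  assert (HaB : forall i, (i < K)%nat -> In (a i) B).
  { intros i Hi; destruct (Hin i Hi) as [->|]; auto. }
  assert (Hai : forall i, (i <= K)%nat -> 0 <= a i <= 1).
  { intros i Hi. rewrite <- H0, <- H1. split; apply (incr_le K a Hinc); lia. }
  assert (Htr : forall i x, (i < K)%nat -> a i <= x < a (S i) -> F x = F (a i) + (x - a i)).
  { intros i x Hi Hx. pose proof (Hai i ltac:(lia)) as Q1. pose proof (Hai (S i) ltac:(lia)) as Q2.
    assert (Q3 : nobk L (a i) x).
    { intros b Hb [Hb1 Hb2].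
      assert (Q4 : In b B). { apply HB; exists b, 0%nat; split; [|split; [lia|reflexivity]].
        right; apply filter_In; split; auto; apply Rin01_spec; lra. }
      destruct (Hall b Q4) as [k [Hk Ek]]. subst b. apply (between_false K a i k x); auto; try lia; lra. }
    pose proof (HL (a i) x ltac:(lra) ltac:(lra) ltac:(lra) Q3). lra. }
  set (sg := fun i => epsilon (inhabits 0%nat) (fun k => (k < K)%nat /\ a k = F (a i))).
  assert (Hsg : forall i, (i < K)%nat -> (sg i < K)%nat /\ a (sg i) = F (a i)).
  { intros i Hi. unfold sg. apply epsilon_spec. apply Hall. apply HBF, HaB; auto. }
  assert (Hend : forall i, (i < K)%nat -> F (a i) + (a (S i) - a i) <= 1).
  { intros i Hi. pose proof (Hai i ltac:(lia)) as Q1. pose proof (Hinc i Hi) as Q2.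
    destruct (Rle_dec (F (a i) + (a (S i) - a i)) 1) as [|Q3]; auto. exfalso.
    pose proof (lift_range f (a i)) as Q4. fold F in Q4.
    pose proof (Htr i (a i + (1 - F (a i))) Hi ltac:(lra)) as Q5.
    pose proof (lift_range f (a i + (1 - F (a i)))) as Q6. fold F in Q6. lra. }
  assert (Hw : forall i, (i < K)%nat -> a (S i) - a i <= a (S (sg i)) - a (sg i)).
  { intros i Hi. destruct (Hsg i Hi) as [Hs Es].
    destruct (Rle_dec (a (S i) - a i) (a (S (sg i)) - a (sg i))); auto. exfalso.
    pose proof (Hend i Hi) as Q1.
    assert (HSK : (S (sg i) < K)%nat).
    { destruct (Nat.eq_dec (S (sg i)) K) as [e|]; [|lia]. rewrite e in n. lra. }
    set (z := a i + (a (S (sg i)) - a (sg i))).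
    pose proof (Hinc (sg i) Hs) as Q2.
    assert (Fz : F z = a (S (sg i))).
    { unfold z; rewrite (Htr i) by (auto; lra). lra. }
    assert (Hz : In z B).
    { pose proof (HBFj (m - 1)%nat (F z) ltac:(rewrite Fz; apply HaB; auto)) as Q3.
      replace (Nat.iter (m-1) F (F z)) with (Nat.iter m F z) in Q3.
      - rewrite HFm in Q3; auto. pose proof (Hai i ltac:(lia)). pose proof (Hai (S i) ltac:(lia)). unfold z; lra.
      - rewrite <- iter_succ_r. f_equal. lia. }
    destruct (Hall z Hz) as [k [Hk Ek]].
    apply (between_false K a i k z); auto; try lia; unfold z in *; lra. }
  assert (Hiter : forall j i, (i < K)%nat -> (Nat.iter j sg i < K)%nat /\
      a (Nat.iter j sg i) = Nat.iter j F (a i) /\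
      a (S i) - a i <= a (S (Nat.iter j sg i)) - a (Nat.iter j sg i)).
  { induction j; intros i Hi; simpl. split; auto; split; auto; lra.
    destruct (IHj i Hi) as [A1 [A2 A3]]. destruct (Hsg _ A1) as [B1 B2].
    split; auto. split. rewrite B2, A2; auto. pose proof (Hw _ A1); lra. }
  assert (Hsgm : forall i, (i < K)%nat -> Nat.iter m sg i = i).
  { intros i Hi. destruct (Hiter m i Hi) as [A1 [A2 _]].
    rewrite HFm in A2 by (pose proof (Hai i ltac:(lia)); pose proof (Hinc i Hi); pose proof (Hai (S i) ltac:(lia)); lra).
    apply (incr_inj K a Hinc); auto; lia. }
  exists K, a, sg, m. unfold cellstr. repeat split; auto.
  - intros i Hi; apply Hsg; auto.
  - intros i Hi. apply Rle_antisym. apply Hw; auto.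
    destruct (Hiter (m - 1)%nat (sg i) ltac:(apply Hsg; auto)) as [_ [_ A3]].
    replace (Nat.iter (m - 1) sg (sg i)) with (Nat.iter m sg i) in A3.
    rewrite Hsgm in A3; auto.
    rewrite <- iter_succ_r. f_equal. lia.
  - intros i x Hi Hx. rewrite (Htr i x Hi Hx). destruct (Hsg i Hi) as [_ ->]. lra.
Qed.
Open Scope nat_scope.

Lemma exists_min (P : nat -> Prop) : (exists n, P n) -> exists n, P n /\ forall n', (n' < n)%nat -> ~ P n'.
Proof.
  intros [n Hn]. revert Hn. induction n as [n IH] using lt_wf_ind. intros Hn.
  destruct (classic (exists n', (n' < n)%nat /\ P n')) as [[n' [H1 H2]]|H].
  - apply (IH n' H1 H2).
  - exists n; split; auto. intros n' Hn' Hp; apply H; eauto.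
Qed.

Definition cyc (K : nat) (sg : nat -> nat) (m : nat) :=
  (0 < m)%nat /\ (forall i, (i < K)%nat -> (sg i < K)%nat) /\ (forall i, (i < K)%nat -> Nat.iter m sg i = i).

Definition it (sg : nat -> nat) j i := Nat.iter j sg i.

Lemma it_lt K sg m : cyc K sg m -> forall j i, (i < K)%nat -> (it sg j i < K)%nat.
Proof. intros [_ [H _]] j; induction j; intros i Hi; simpl; auto. Qed.

Lemma it_add sg i j x : it sg (i + j) x = it sg i (it sg j x).
Proof. apply iter_add. Qed.

Lemma it_S sg j x : it sg (S j) x = sg (it sg j x).
Proof. reflexivity. Qed.

Lemma it_Sr sg j x : it sg (S j) x = it sg j (sg x).
Proof. apply iter_succ_r. Qed.

Lemma it_mul K sg m : cyc K sg m -> forall q i, (i < K)%nat -> it sg (q * m) i = i.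
Proof.
  intros C q; induction q; intros i Hi; simpl; auto.
  unfold it in *; rewrite iter_add. rewrite (proj2 (proj2 C)) by (apply (it_lt K sg m C); auto).
  apply IHq; auto.
Qed.

Lemma sg_inj K sg m : cyc K sg m -> forall i i', (i < K)%nat -> (i' < K)%nat -> sg i = sg i' -> i = i'.
Proof.
  intros C i i' Hi Hi' E. destruct C as [Hm [Hs Hid]].
  rewrite <- (Hid i Hi), <- (Hid i' Hi').
  replace m with (S (m - 1)) by lia. rewrite !iter_succ_r, E; auto.
Qed.

Lemma it_inj K sg m : cyc K sg m -> forall j i i', (i < K)%nat -> (i' < K)%nat -> it sg j i = it sg j i' -> i = i'.
Proof.
  intros C j; induction j; intros i i' Hi Hi' E; simpl in *; auto.
  apply IHj; auto. apply (sg_inj K sg m C); auto; apply (it_lt K sg m C); auto.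
Qed.

Definition per (sg : nat -> nat) i :=
  epsilon (inhabits 1%nat) (fun d => (0 < d)%nat /\ it sg d i = i /\ forall d', (0 < d')%nat -> (d' < d)%nat -> it sg d' i <> i).

Lemma per_spec K sg m : cyc K sg m -> forall i, (i < K)%nat ->
  (0 < per sg i)%nat /\ it sg (per sg i) i = i /\ forall d', (0 < d')%nat -> (d' < per sg i)%nat -> it sg d' i <> i.
Proof.
  intros C i Hi. unfold per. apply epsilon_spec.
  destruct (exists_min (fun d => (0 < d)%nat /\ it sg d i = i)) as [d [[H1 H2] H3]].
  { exists m; split. apply C. apply C; auto. }
  exists d; repeat split; auto. intros d' Hd' Hdd E. apply (H3 d' Hdd); auto.
Qed.

Lemma it_mod K sg m : cyc K sg m -> forall j i, (i < K)%nat -> it sg j i = it sg (j mod per sg i) i.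
Proof.
  intros C j i Hi. destruct (per_spec K sg m C i Hi) as [P1 [P2 _]].
  rewrite (Nat.div_mod j (per sg i)) at 1 by lia.
  rewrite Nat.add_comm, it_add. f_equal.
  generalize (j / per sg i); intros q. induction q.
  - rewrite Nat.mul_0_r; auto.
  - replace (per sg i * S q)%nat with (per sg i + per sg i * q)%nat by lia.
    rewrite it_add, IHq; auto.
Qed.

Lemma it_fix K sg m : cyc K sg m -> forall j i, (i < K)%nat -> it sg j i = i -> (j mod per sg i = 0)%nat.
Proof.
  intros C j i Hi E. destruct (per_spec K sg m C i Hi) as [P1 [P2 P3]].
  rewrite (it_mod K sg m C) in E; auto.
  destruct (Nat.eq_dec (j mod per sg i) 0); auto. exfalso.
  apply (P3 (j mod per sg i)); auto; try lia. apply Nat.mod_upper_bound; lia.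
Qed.

Lemma per_unique K sg m : cyc K sg m -> forall i d, (i < K)%nat -> (0 < d)%nat -> it sg d i = i ->
  (forall d', (0 < d')%nat -> (d' < d)%nat -> it sg d' i <> i) -> per sg i = d.
Proof.
  intros C i d Hi Hd E M. destruct (per_spec K sg m C i Hi) as [P1 [P2 P3]].
  destruct (lt_eq_lt_dec (per sg i) d) as [[?|?]|?]; auto.
  - exfalso; apply (M (per sg i)); auto.
  - exfalso; apply (P3 d); auto.
Qed.

Lemma per_it K sg m : cyc K sg m -> forall j i, (i < K)%nat -> per sg (it sg j i) = per sg i.
Proof.
  intros C j i Hi. destruct (per_spec K sg m C i Hi) as [P1 [P2 P3]].
  apply (per_unique K sg m C); auto. apply (it_lt K sg m C); auto.
  - rewrite <- it_add, Nat.add_comm, it_add, P2; auto.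
  - intros d' H1 H2 E. rewrite <- it_add, Nat.add_comm, it_add in E.
    apply (it_inj K sg m C j) in E; auto. apply (P3 d'); auto. apply (it_lt K sg m C); auto.
Qed.

Definition orb (sg : nat -> nat) i i' := exists j, it sg j i = i'.

Lemma orb_sym K sg m : cyc K sg m -> forall i i', (i < K)%nat -> orb sg i i' -> orb sg i' i.
Proof.
  intros C i i' Hi [j <-]. exists ((m - 1) * j)%nat.
  rewrite <- it_add. replace ((m - 1) * j + j)%nat with (j * m)%nat.
  apply (it_mul K sg m C); auto. destruct C; nia.
Qed.

Lemma orb_trans sg i i' i'' : orb sg i i' -> orb sg i' i'' -> orb sg i i''.
Proof. intros [j <-] [j' <-]. exists (j' + j)%nat. apply it_add. Qed.

Definition rep K sg r := (r < K)%nat /\ forall j, (r <= it sg j r)%nat.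

Lemma rep_exists K sg m : cyc K sg m -> forall i, (i < K)%nat -> exists r, rep K sg r /\ orb sg r i.
Proof.
  intros C i Hi.
  destruct (exists_min (fun n => orb sg i n)) as [r [[j0 Hr] Hmin]]. exists i, 0%nat; auto.
  exists r; split.
  - split. subst r; apply (it_lt K sg m C); auto.
    intros j. destruct (le_lt_dec r (it sg j r)); auto. exfalso.
    apply (Hmin _ l). exists (j + j0)%nat. rewrite it_add, Hr; auto.
  - apply (orb_sym K sg m C); auto. exists j0; auto.
Qed.

Lemma rep_unique K sg m : cyc K sg m -> forall r r' i, rep K sg r -> rep K sg r' -> orb sg r i -> orb sg r' i -> r = r'.
Proof.
  intros C r r' i [Hr Hr1] [Hr' Hr1'] O1 O2.
  assert (O3 : orb sg r r'). { apply (orb_trans sg r i r'); auto. apply (orb_sym K sg m C); auto. }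
  assert (O4 : orb sg r' r). { apply (orb_sym K sg m C); auto. }
  destruct O3 as [j1 E1]; destruct O4 as [j2 E2].
  specialize (Hr1 j1); specialize (Hr1' j2). lia.
Qed.

Definition rp K sg i := epsilon (inhabits 0%nat) (fun r => rep K sg r /\ orb sg r i).

Lemma rp_spec K sg m : cyc K sg m -> forall i, (i < K)%nat -> rep K sg (rp K sg i) /\ orb sg (rp K sg i) i.
Proof. intros C i Hi. unfold rp; apply epsilon_spec. apply (rep_exists K sg m C); auto. Qed.

Lemma rp_eq K sg m : cyc K sg m -> forall i r, (i < K)%nat -> rep K sg r -> orb sg r i -> rp K sg i = r.
Proof.
  intros C i r Hi Hr O. destruct (rp_spec K sg m C i Hi). apply (rep_unique K sg m C _ _ i); auto.
Qed.

Lemma per_orb K sg m : cyc K sg m -> forall i i', (i < K)%nat -> orb sg i i' -> per sg i' = per sg i.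
Proof. intros C i i' Hi [j <-]. apply (per_it K sg m C); auto. Qed.

Definition jj K sg i := epsilon (inhabits 0%nat) (fun j => (j < per sg i)%nat /\ it sg j (rp K sg i) = i).

Lemma jj_spec K sg m : cyc K sg m -> forall i, (i < K)%nat ->
  (jj K sg i < per sg i)%nat /\ it sg (jj K sg i) (rp K sg i) = i.
Proof.
  intros C i Hi. unfold jj; apply epsilon_spec.
  destruct (rp_spec K sg m C i Hi) as [[Hr _] [j Ej]].
  assert (Pe : per sg i = per sg (rp K sg i)) by (apply (per_orb K sg m C); auto; exists j; auto).
  exists (j mod per sg i). split.
  - apply Nat.mod_upper_bound. destruct (per_spec K sg m C i Hi); lia.
  - rewrite Pe, <- (it_mod K sg m C); auto.
Qed.

Lemma jj_unique K sg m : cyc K sg m -> forall r j j', rep K sg r -> (j < per sg r)%nat -> (j' < per sg r)%nat ->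
  it sg j r = it sg j' r -> j = j'.
Proof.
  intros C r j j' [Hr _] Hj Hj' E.
  destruct (per_spec K sg m C r Hr) as [P1 [P2 P3]].
  destruct (lt_eq_lt_dec j j') as [[?|?]|?]; auto; exfalso.
  - replace j' with (j + (j' - j))%nat in E by lia. rewrite it_add in E.
    apply (P3 (j' - j)%nat); try lia. apply (it_inj K sg m C j); [apply (it_lt K sg m C); auto|auto|symmetry; auto].
  - replace j with (j' + (j - j'))%nat in E by lia. rewrite it_add in E.
    apply (P3 (j - j')%nat); try lia. apply (it_inj K sg m C j'); [apply (it_lt K sg m C); auto|auto|auto].
Qed.

Lemma rp_jj_of K sg m : cyc K sg m -> forall r j, rep K sg r -> (j < per sg r)%nat ->
  rp K sg (it sg j r) = r /\ jj K sg (it sg j r) = j.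
Proof.
  intros C r j Hr Hj. pose proof (proj1 Hr) as Hr0.
  assert (Hi : (it sg j r < K)%nat) by (apply (it_lt K sg m C); auto).
  assert (E : rp K sg (it sg j r) = r) by (apply (rp_eq K sg m C); auto; exists j; auto).
  split; auto.
  destruct (jj_spec K sg m C _ Hi) as [J1 J2]. rewrite E in J2.
  rewrite (per_it K sg m C) in J1; auto.
  apply (jj_unique K sg m C r); auto.
Qed.

Lemma rp_sg K sg m : cyc K sg m -> forall i, (i < K)%nat -> rp K sg (sg i) = rp K sg i.
Proof.
  intros C i Hi. destruct (rp_spec K sg m C i Hi) as [Hr O].
  apply (rp_eq K sg m C); auto. apply C; auto.
  apply (orb_trans sg _ i); auto. exists 1%nat; auto.
Qed.

Lemma jj_sg K sg m : cyc K sg m -> forall i, (i < K)%nat ->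
  jj K sg (sg i) = if Nat.eqb (S (jj K sg i)) (per sg i) then 0%nat else S (jj K sg i).
Proof.
  intros C i Hi. destruct (rp_spec K sg m C i Hi) as [Hr O].
  destruct (jj_spec K sg m C i Hi) as [J1 J2].
  set (r := rp K sg i) in *. set (j := jj K sg i) in *.
  assert (Pe : per sg i = per sg r) by (apply (per_orb K sg m C); auto; apply Hr).
  destruct (per_spec K sg m C r (proj1 Hr)) as [P1 [P2 P3]].
  destruct (Nat.eqb_spec (S j) (per sg i)).
  - assert (E : sg i = it sg 0 r). { rewrite <- J2, <- it_S, e, Pe; auto. }
    rewrite E. apply (rp_jj_of K sg m C); auto; lia.
  - assert (E : sg i = it sg (S j) r). { rewrite <- J2; auto. }
    rewrite E. apply (rp_jj_of K sg m C); auto; lia.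
Qed.
Open Scope R_scope.

Fixpoint sumP (P : nat -> Prop) (g : nat -> R) (n : nat) : R :=
  match n with
  | O => 0
  | S n' => sumP P g n' + (if excluded_middle_informative (P n') then g n' else 0)
  end.

Lemma sumP_S P g n : P n -> sumP P g (S n) = sumP P g n + g n.
Proof. intros H; simpl; destruct (excluded_middle_informative (P n)); tauto. Qed.

Lemma sumP_nS P g n : ~ P n -> sumP P g (S n) = sumP P g n.
Proof. intros H; simpl; destruct (excluded_middle_informative (P n)); try tauto; lra. Qed.

Lemma sumP_mono P g n n' : (forall i, 0 <= g i) -> (n <= n')%nat -> sumP P g n <= sumP P g n'.
Proof.
  intros Hg H; induction H; try lra. simpl. destruct (excluded_middle_informative (P m)); pose proof (Hg m); lra.
Qed.

Lemma sumP_nonneg P g n : (forall i, 0 <= g i) -> 0 <= sumP P g n.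
Proof. intros Hg. apply (sumP_mono P g 0 n Hg); lia. Qed.

Lemma sumP_lt P g r r' : (forall i, 0 <= g i) -> P r -> (r < r')%nat -> sumP P g r + g r <= sumP P g r'.
Proof. intros Hg Hr H. rewrite <- sumP_S; auto. apply sumP_mono; auto. Qed.

Lemma sumP_find P g n t : (forall i, 0 <= g i) -> 0 <= t < sumP P g n ->
  exists r, (r < n)%nat /\ P r /\ sumP P g r <= t < sumP P g r + g r.
Proof.
  intros Hg; induction n; intros Ht; simpl in Ht. lra.
  destruct (Rlt_dec t (sumP P g n)) as [Hlt|Hge].
  - destruct IHn as [r [? ?]]. pose proof (sumP_nonneg P g n Hg); lra. exists r; split; auto.
  - destruct (excluded_middle_informative (P n)). exists n; repeat split; auto; lra. lra.
Qed.

Open Scope R_scope.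

Lemma cs_cyc F K a sg m : cellstr F K a sg m -> cyc K sg m.
Proof. intros (HK & H0 & H1 & Hinc & Hm & Hsg & Hw & HF & Hid). split; auto. Qed.

Definition wd (K : nat) (a : nat -> R) (i : nat) : R := if Nat.ltb i K then a (S i) - a i else 0.

Lemma wd_nonneg F K a sg m : cellstr F K a sg m -> forall i, 0 <= wd K a i.
Proof.
  intros (HK & H0 & H1 & Hinc & Hm & Hsg & Hw & HF & Hid) i. unfold wd.
  destruct (Nat.ltb_spec i K); try lra. pose proof (Hinc i H); lra.
Qed.

Lemma wd_pos F K a sg m : cellstr F K a sg m -> forall i, (i < K)%nat -> 0 < wd K a i.
Proof.
  intros (HK & H0 & H1 & Hinc & Hm & Hsg & Hw & HF & Hid) i Hi. unfold wd.
  destruct (Nat.ltb_spec i K); try lia. pose proof (Hinc i H); lra.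
Qed.

Lemma wd_it F K a sg m : cellstr F K a sg m -> forall j i, (i < K)%nat -> wd K a (it sg j i) = wd K a i.
Proof.
  intros CS j i Hi. pose proof (cs_cyc _ _ _ _ _ CS) as C.
  destruct CS as (HK & H0 & H1 & Hinc & Hm & Hsg & Hw & HF & Hid).
  induction j; simpl; auto. rewrite <- IHj. fold (it sg j i).
  assert (Hl : (it sg j i < K)%nat) by (apply (it_lt K sg m C); auto).
  pose proof (Hsg _ Hl). unfold wd. destruct (Nat.ltb_spec (sg (it sg j i)) K); destruct (Nat.ltb_spec (it sg j i) K); try lia.
  symmetry; apply Hw; auto.
Qed.

Definition cidx (K : nat) (a : nat -> R) (x : R) : nat :=
  epsilon (inhabits 0%nat) (fun i => (i < K)%nat /\ a i <= x < a (S i)).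

Lemma cidx_spec F K a sg m : cellstr F K a sg m -> forall x, 0 <= x < 1 ->
  (cidx K a x < K)%nat /\ a (cidx K a x) <= x < a (S (cidx K a x)).
Proof.
  intros (HK & H0 & H1 & Hinc & Hm & Hsg & Hw & HF & Hid) x Hx. unfold cidx; apply epsilon_spec.
  apply (cover K a Hinc). lra.
Qed.

Lemma cidx_eq F K a sg m : cellstr F K a sg m -> forall x i, (i < K)%nat -> a i <= x < a (S i) -> cidx K a x = i.
Proof.
  intros CS x i Hi Hx. assert (Hx01 : 0 <= x < 1).
  { destruct CS as (HK & Ha0 & Ha1 & Hinc & _). pose proof (incr_le K a Hinc 0 i ltac:(lia) ltac:(lia)).
    pose proof (incr_le K a Hinc (S i) K ltac:(lia) ltac:(lia)). lra. }
  destruct (cidx_spec _ _ _ _ _ CS x Hx01).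
  destruct CS as (HK & Ha0 & Ha1 & Hinc & _). apply (cell_unique K a Hinc _ _ x); auto.
Qed.

Lemma cell_range F K a sg m : cellstr F K a sg m -> forall i x, (i < K)%nat -> a i <= x < a (S i) -> 0 <= x < 1.
Proof.
  intros (HK & Ha0 & Ha1 & Hinc & _) i x Hi Hx. pose proof (incr_le K a Hinc 0 i ltac:(lia) ltac:(lia)).
  pose proof (incr_le K a Hinc (S i) K ltac:(lia) ltac:(lia)). lra.
Qed.

Lemma cell_iter F K a sg m : cellstr F K a sg m -> forall j i x, (i < K)%nat -> a i <= x < a (S i) ->
  Nat.iter j F x = x - a i + a (it sg j i) /\ a (it sg j i) <= Nat.iter j F x < a (S (it sg j i)).
Proof.
  intros CS j. pose proof (cs_cyc _ _ _ _ _ CS) as C.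
  induction j; intros i x Hi Hx; simpl. split; [lra|auto].
  destruct (IHj i x Hi Hx) as [E1 E2]. fold (it sg j i) in *.
  assert (Hl : (it sg j i < K)%nat) by (apply (it_lt K sg m C); auto).
  destruct CS as (HK & H0 & H1 & Hinc & Hm & Hsg & Hw & HF & Hid).
  rewrite (HF _ _ Hl E2). split. lra. pose proof (Hw _ Hl). lra.
Qed.

Definition Xd (K : nat) (a : nat -> R) (sg : nat -> nat) (d : nat) (x : R) : Prop :=
  0 <= x < 1 /\ per sg (cidx K a x) = d.

Lemma Xd_char F K a sg m : cellstr F K a sg m -> forall d x, 0 <= x < 1 ->
  (Xd K a sg d x <-> (0 < d)%nat /\ Nat.iter d F x = x /\ forall d', (0 < d')%nat -> (d' < d)%nat -> Nat.iter d' F x <> x).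
Proof.
  intros CS d x Hx. pose proof (cs_cyc _ _ _ _ _ CS) as C.
  destruct (cidx_spec _ _ _ _ _ CS x Hx) as [Hi Hxi]. set (i := cidx K a x) in *.
  assert (Key : forall j, Nat.iter j F x = x <-> it sg j i = i).
  { intros j. destruct (cell_iter _ _ _ _ _ CS j i x Hi Hxi) as [E1 E2].
    assert (Hl : (it sg j i < K)%nat) by (apply (it_lt K sg m C); auto).
    split; intros E.
    - rewrite E in E2. destruct CS as (HK & Ha0 & Ha1 & Hinc & _). apply (cell_unique K a Hinc _ _ x); auto.
    - rewrite E1, E; lra. }
  unfold Xd; fold i. split.
  - intros [_ <-]. destruct (per_spec K sg m C i Hi) as [P1 [P2 P3]]. repeat split; auto.
    apply Key; auto. intros d' ? ? E; apply Key in E; apply (P3 d'); auto.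
  - intros [D1 [D2 D3]]. split; auto. apply (per_unique K sg m C); auto. apply Key; auto.
    intros d' ? ? E; apply (D3 d'); auto; apply Key; auto.
Qed.

Lemma Xd_F F K a sg m : cellstr F K a sg m -> forall d x, Xd K a sg d x -> Xd K a sg d (F x).
Proof.
  intros CS d x [Hx Hp]. pose proof (cs_cyc _ _ _ _ _ CS) as C.
  destruct (cidx_spec _ _ _ _ _ CS x Hx) as [Hi Hxi].
  destruct (cell_iter _ _ _ _ _ CS 1 _ x Hi Hxi) as [E1 E2]. simpl in E1, E2.
  assert (Hl : (sg (cidx K a x) < K)%nat) by (apply C; auto).
  split. apply (cell_range _ _ _ _ _ CS _ _ Hl E2).
  rewrite (cidx_eq _ _ _ _ _ CS _ _ Hl E2). rewrite <- Hp. apply (per_it K sg m C 1); auto.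
Qed.
Open Scope R_scope.

Definition Pd K sg d r := rep K sg r /\ per sg r = d.
Definition ell K a sg d := sumP (Pd K sg d) (wd K a) K.
Definition Soff K a sg d r := sumP (Pd K sg d) (wd K a) r.
Definition Nnum K a sg d x := let i := cidx K a x in
  INR (jj K sg i) * ell K a sg d + Soff K a sg d (rp K sg i) + (x - a i).
Definition psi K a sg d x := Nnum K a sg d x / (INR d * ell K a sg d).

Lemma rp_lt F K a sg m : cellstr F K a sg m -> forall i, (i < K)%nat -> (rp K sg i < K)%nat.
Proof. intros CS i Hi. apply (rp_spec K sg m (cs_cyc _ _ _ _ _ CS) i Hi). Qed.

Lemma Pd_rp F K a sg m : cellstr F K a sg m -> forall i, (i < K)%nat -> Pd K sg (per sg i) (rp K sg i).
Proof.
  intros CS i Hi. pose proof (cs_cyc _ _ _ _ _ CS) as C. destruct (rp_spec K sg m C i Hi) as [Hr O].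
  split; auto. symmetry; apply (per_orb K sg m C); auto. apply Hr.
Qed.

Lemma wd_rp F K a sg m : cellstr F K a sg m -> forall i, (i < K)%nat -> wd K a (rp K sg i) = wd K a i.
Proof.
  intros CS i Hi. pose proof (cs_cyc _ _ _ _ _ CS) as C. destruct (jj_spec K sg m C i Hi) as [_ J].
  rewrite <- J at 2. symmetry; apply (wd_it _ _ _ _ _ CS). apply (rp_lt _ _ _ _ _ CS); auto.
Qed.

Lemma Soff_bound F K a sg m : cellstr F K a sg m -> forall d r, (r < K)%nat -> Pd K sg d r ->
  0 <= Soff K a sg d r /\ Soff K a sg d r + wd K a r <= ell K a sg d.
Proof.
  intros CS d r Hr HP. pose proof (wd_nonneg _ _ _ _ _ CS) as Hw. split.
  apply sumP_nonneg; auto. apply sumP_lt; auto.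
Qed.

Lemma ell_pos F K a sg m : cellstr F K a sg m -> forall i, (i < K)%nat -> 0 < ell K a sg (per sg i).
Proof.
  intros CS i Hi. pose proof (Soff_bound _ _ _ _ _ CS _ _ (rp_lt _ _ _ _ _ CS i Hi) (Pd_rp _ _ _ _ _ CS i Hi)).
  pose proof (wd_pos _ _ _ _ _ CS _ (rp_lt _ _ _ _ _ CS i Hi)). lra.
Qed.

Lemma Nnum_bounds F K a sg m : cellstr F K a sg m -> forall d x, Xd K a sg d x ->
  let i := cidx K a x in
  INR (jj K sg i) * ell K a sg d + Soff K a sg d (rp K sg i) <= Nnum K a sg d x /\
  Nnum K a sg d x < INR (jj K sg i) * ell K a sg d + Soff K a sg d (rp K sg i) + wd K a (rp K sg i) /\
  0 <= Soff K a sg d (rp K sg i) /\ Soff K a sg d (rp K sg i) + wd K a (rp K sg i) <= ell K a sg d /\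
  (jj K sg i < d)%nat.
Proof.
  intros CS d x [Hx Hp] i. pose proof (cs_cyc _ _ _ _ _ CS) as C.
  destruct (cidx_spec _ _ _ _ _ CS x Hx) as [Hi Hxi]. fold i in Hi, Hxi.
  assert (Hp' : per sg i = d) by exact Hp. clear Hp; rename Hp' into Hp.
  pose proof (Pd_rp _ _ _ _ _ CS i Hi) as HP. rewrite Hp in HP.
  pose proof (Soff_bound _ _ _ _ _ CS _ _ (rp_lt _ _ _ _ _ CS i Hi) HP) as [S1 S2].
  rewrite (wd_rp _ _ _ _ _ CS i Hi) in *.
  assert (Ew : wd K a i = a (S i) - a i) by (unfold wd; destruct (Nat.ltb_spec i K); lia || auto).
  destruct (jj_spec K sg m C i Hi) as [J1 _]. fold i in J1. rewrite Hp in J1.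
  unfold Nnum; fold i. repeat split; auto; lra.
Qed.

Lemma INR_lt_nat (j d : nat) : (j < d)%nat -> INR j + 1 <= INR d.
Proof. intros H. rewrite <- S_INR. apply le_INR; lia. Qed.

Lemma div_nonneg x y : 0 <= x -> 0 < y -> 0 <= x / y.
Proof. intros; unfold Rdiv; apply Rmult_le_pos; auto. left; apply Rinv_0_lt_compat; auto. Qed.

Lemma div_lt1 x y : x < y -> 0 < y -> x / y < 1.
Proof. intros H1 H2. apply (Rmult_lt_reg_r y); auto. unfold Rdiv. rewrite Rmult_assoc, Rinv_l; lra. Qed.

Lemma psi_range F K a sg m : cellstr F K a sg m -> forall d x, Xd K a sg d x -> 0 <= psi K a sg d x < 1.
Proof.
  intros CS d x HX. pose proof (Nnum_bounds _ _ _ _ _ CS d x HX) as (B1 & B2 & B3 & B4 & B5).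
  destruct HX as [Hx Hp]. destruct (cidx_spec _ _ _ _ _ CS x Hx) as [Hi _].
  pose proof (ell_pos _ _ _ _ _ CS _ Hi) as Hl. rewrite Hp in Hl.
  set (l := ell K a sg d) in *. set (j := jj K sg (cidx K a x)) in *.
  pose proof (pos_INR j). pose proof (INR_lt_nat _ _ B5).
  unfold psi. fold l. assert (0 < INR d * l) by (apply Rmult_lt_0_compat; lra).
  split.
  - apply div_nonneg; try lra. pose proof (Rmult_le_pos (INR j) l); nra.
  - apply div_lt1; auto. nra.
Qed.

Lemma psi_PA F K a sg m d i : cellstr F K a sg m -> (i < K)%nat ->
  PAI (/ (INR d * ell K a sg d)) nil (a i) (a (S i)) (psi K a sg d).
Proof.
  intros CS Hi x y Hx Hxy Hy _. unfold psi, Nnum.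
  rewrite (cidx_eq _ _ _ _ _ CS x i Hi ltac:(lra)), (cidx_eq _ _ _ _ _ CS y i Hi ltac:(lra)).
  unfold Rdiv. ring.
Qed.

Lemma psi_conj F K a sg m d x : cellstr F K a sg m -> Xd K a sg d x ->
  psi K a sg d (F x) = frac_part (psi K a sg d x + / INR d).
Proof.
  intros CS HX. pose proof (cs_cyc _ _ _ _ _ CS) as C.
  pose proof (psi_range _ _ _ _ _ CS d x HX) as R1.
  pose proof (psi_range _ _ _ _ _ CS d (F x) (Xd_F _ _ _ _ _ CS d x HX)) as R2.
  pose proof (Nnum_bounds _ _ _ _ _ CS d x HX) as (B1 & B2 & B3 & B4 & B5).
  destruct HX as [Hx Hp]. destruct (cidx_spec _ _ _ _ _ CS x Hx) as [Hi Hxi].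
  set (i := cidx K a x) in *.
  pose proof (ell_pos _ _ _ _ _ CS _ Hi) as Hl. rewrite Hp in Hl.
  destruct (cell_iter _ _ _ _ _ CS 1 i x Hi Hxi) as [E1 E2]. simpl in E1, E2.
  assert (Hsi : (sg i < K)%nat) by (apply C; auto).
  assert (Ci : cidx K a (F x) = sg i) by (apply (cidx_eq _ _ _ _ _ CS); auto).
  assert (Rp : rp K sg (sg i) = rp K sg i) by (apply (rp_sg K sg m C); auto).
  pose proof (jj_sg K sg m C i Hi) as Jj.
  assert (Hd : (0 < d)%nat) by (rewrite <- Hp; apply (per_spec K sg m C i Hi)).
  assert (Dp : 0 < INR d) by (apply lt_0_INR; auto).
  set (l := ell K a sg d) in *.
  assert (Ps : psi K a sg d (F x) = psi K a sg d x + (INR (jj K sg (sg i)) - INR (jj K sg i)) / INR d).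
  { unfold psi, Nnum. rewrite Ci, Rp. fold i. fold l. rewrite E1. field. lra. }
  rewrite Hp in Jj. destruct (Nat.eqb_spec (S (jj K sg i)) d) as [e|n].
  - rewrite Jj in Ps. simpl INR in Ps.
    assert (INR (jj K sg i) = INR d - 1) by (rewrite <- e, S_INR; ring).
    rewrite (frac_eq _ 1). simpl IZR. rewrite Ps, H. field. lra.
    simpl IZR. rewrite Ps, H in R2. split. 
    + replace (psi K a sg d x + / INR d) with (psi K a sg d x + (0 - (INR d - 1)) / INR d + 1) by (field; lra). lra.
    + replace (psi K a sg d x + / INR d) with (psi K a sg d x + (0 - (INR d - 1)) / INR d + 1) by (field; lra). lra.
  - rewrite Jj, S_INR in Ps.
    replace (INR (jj K sg i) + 1 - INR (jj K sg i)) with 1 in Ps by ring.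
    rewrite frac_id. rewrite Ps; unfold Rdiv; ring. rewrite Ps in R2. unfold Rdiv in R2. lra.
Qed.

Lemma floor_nat (d : nat) (t : R) : 0 <= t < INR d -> exists j, (j < d)%nat /\ INR j <= t < INR j + 1.
Proof.
  induction d; intros Ht. simpl in Ht; lra.
  destruct (Rlt_dec t (INR d)).
  - destruct (IHd ltac:(lra)) as [j [? ?]]. exists j; split; auto.
  - exists d; split; auto. rewrite S_INR in Ht. lra.
Qed.

Lemma psi_surj F K a sg m d u : cellstr F K a sg m -> (exists i, (i < K)%nat /\ per sg i = d) ->
  0 <= u < 1 -> exists x, Xd K a sg d x /\ psi K a sg d x = u.
Proof.
  intros CS [i0 [Hi0 Hp0]] Hu. pose proof (cs_cyc _ _ _ _ _ CS) as C.
  pose proof (ell_pos _ _ _ _ _ CS _ Hi0) as Hl. rewrite Hp0 in Hl. set (l := ell K a sg d) in *.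
  assert (Hd : (0 < d)%nat) by (rewrite <- Hp0; apply (per_spec K sg m C i0 Hi0)).
  assert (Dp : 0 < INR d) by (apply lt_0_INR; auto).
  destruct (floor_nat d (u * INR d)) as [j [Hj Hjt]]. split; nra.
  set (t := (u * INR d - INR j) * l).
  assert (Ht : 0 <= t < sumP (Pd K sg d) (wd K a) K) by (fold (ell K a sg d); fold l; unfold t; nra).
  destruct (sumP_find _ _ _ t (wd_nonneg _ _ _ _ _ CS) Ht) as [r [Hr [HP Hrt]]].
  assert (Hrep : rep K sg r) by apply HP.
  assert (Hpr : per sg r = d) by apply HP.
  destruct (rp_jj_of K sg m C r j Hrep ltac:(lia)) as [Rp Jj].
  set (i := it sg j r).
  assert (Hi : (i < K)%nat) by (apply (it_lt K sg m C); auto).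
  assert (Wi : wd K a i = wd K a r) by (apply (wd_it _ _ _ _ _ CS); auto).
  assert (Ew : wd K a i = a (S i) - a i) by (unfold wd; destruct (Nat.ltb_spec i K); lia || auto).
  set (x := a i + (t - Soff K a sg d r)).
  assert (Hxi : a i <= x < a (S i)) by (unfold x, Soff; lra).
  assert (Cx : cidx K a x = i) by (apply (cidx_eq _ _ _ _ _ CS); auto).
  exists x. split.
  - split. apply (cell_range _ _ _ _ _ CS i); auto. rewrite Cx. unfold i. rewrite (per_it K sg m C); auto.
  - unfold psi, Nnum. rewrite Cx. fold i in Rp, Jj. rewrite Rp, Jj. fold l. unfold x, t. field. lra.
Qed.

Lemma psi_inj F K a sg m d x y : cellstr F K a sg m -> Xd K a sg d x -> Xd K a sg d y ->
  psi K a sg d x = psi K a sg d y -> x = y.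
Proof.
  intros CS HX HY E. pose proof (cs_cyc _ _ _ _ _ CS) as C.
  pose proof (Nnum_bounds _ _ _ _ _ CS d x HX) as (B1 & B2 & B3 & B4 & B5).
  pose proof (Nnum_bounds _ _ _ _ _ CS d y HY) as (B1' & B2' & B3' & B4' & B5').
  destruct HX as [Hx Hp]. destruct HY as [Hy Hp'].
  destruct (cidx_spec _ _ _ _ _ CS x Hx) as [Hi Hxi].
  destruct (cidx_spec _ _ _ _ _ CS y Hy) as [Hi' Hyi].
  set (i := cidx K a x) in *. set (i' := cidx K a y) in *.
  pose proof (ell_pos _ _ _ _ _ CS _ Hi) as Hl. rewrite Hp in Hl.
  assert (Hd : (0 < d)%nat) by (rewrite <- Hp; apply (per_spec K sg m C i Hi)).
  assert (Dp : 0 < INR d) by (apply lt_0_INR; auto).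
  set (l := ell K a sg d) in *.
  assert (EN : Nnum K a sg d x = Nnum K a sg d y).
  { unfold psi in E. fold l in E. apply (Rmult_eq_reg_r (/ (INR d * l))). apply E.
    apply Rinv_neq_0_compat. nra. }
  set (j := jj K sg i) in *. set (j' := jj K sg i') in *.
  set (r := rp K sg i) in *. set (r' := rp K sg i') in *.
  assert (Ejj : j = j').
  { destruct (lt_eq_lt_dec j j') as [[Hlt|]|Hlt]; auto; exfalso.
    - pose proof (INR_lt_nat _ _ Hlt). nra.
    - pose proof (INR_lt_nat _ _ Hlt). nra. }
  assert (Pr : Pd K sg d r) by (rewrite <- Hp; apply (Pd_rp _ _ _ _ _ CS); auto).
  assert (Pr' : Pd K sg d r') by (rewrite <- Hp'; apply (Pd_rp _ _ _ _ _ CS); auto).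
  pose proof (wd_nonneg _ _ _ _ _ CS) as Hw.
  assert (Err : r = r').
  { rewrite Ejj in *. destruct (lt_eq_lt_dec r r') as [[Hlt|]|Hlt]; auto; exfalso.
    - pose proof (sumP_lt (Pd K sg d) (wd K a) r r' Hw Pr Hlt). unfold Soff in *. lra.
    - pose proof (sumP_lt (Pd K sg d) (wd K a) r' r Hw Pr' Hlt). unfold Soff in *. lra. }
  assert (Eii : i = i').
  { destruct (jj_spec K sg m C i Hi) as [_ J1]. destruct (jj_spec K sg m C i' Hi') as [_ J2].
    fold j r in J1. fold j' r' in J2. rewrite <- J1, <- J2, Ejj, Err; auto. }
  unfold Nnum in EN. fold i i' in EN. fold j j' r r' in EN. rewrite <- Eii in EN. rewrite Ejj, Err in EN. lra.
Qed.
Open Scope R_scope.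

Definition psinv K a sg d u := epsilon (inhabits 0) (fun x => Xd K a sg d x /\ psi K a sg d x = u).

Definition hasd K sg d := exists c, (c < K)%nat /\ per sg c = d.

Lemma psinv_spec F K a sg m d u : cellstr F K a sg m -> hasd K sg d -> 0 <= u < 1 ->
  Xd K a sg d (psinv K a sg d u) /\ psi K a sg d (psinv K a sg d u) = u.
Proof. intros CS Ex Hu. unfold psinv; apply epsilon_spec. apply (psi_surj F K a sg m); auto. Qed.

Lemma psinv_psi F K a sg m d x : cellstr F K a sg m -> hasd K sg d -> Xd K a sg d x ->
  psinv K a sg d (psi K a sg d x) = x.
Proof.
  intros CS Ex HX. destruct (psinv_spec F K a sg m d (psi K a sg d x) CS Ex (psi_range _ _ _ _ _ CS d x HX)) as [A B].
  apply (psi_inj F K a sg m d); auto.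
Qed.

Lemma ell_pos_d F K a sg m d : cellstr F K a sg m -> hasd K sg d -> 0 < ell K a sg d /\ 0 < INR d.
Proof.
  intros CS [c [Hc Hp]]. pose proof (cs_cyc _ _ _ _ _ CS) as C. split.
  rewrite <- Hp; apply (ell_pos _ _ _ _ _ CS c Hc).
  apply lt_0_INR. rewrite <- Hp; apply (per_spec K sg m C c Hc).
Qed.

Definition Lt K a sg d := flat_map (fun c => psi K a sg d (a c) :: (psi K a sg d (a c) + wd K a c / (INR d * ell K a sg d)) :: nil) (seq 0 K).

Lemma psinv_PA F K a sg m d : cellstr F K a sg m -> hasd K sg d ->
  PAI (INR d * ell K a sg d) (Lt K a sg d) 0 1 (psinv K a sg d).
Proof.
  intros CS Ex u v Hu Huv Hv Hb. destruct (ell_pos_d _ _ _ _ _ _ CS Ex) as [Hl Hd].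
  set (l := ell K a sg d) in *. assert (Dp : 0 < INR d * l) by nra.
  destruct (psinv_spec F K a sg m d u CS Ex ltac:(lra)) as [HX Hpx].
  set (x := psinv K a sg d u) in *.
  destruct HX as [Hx Hpc]. destruct (cidx_spec _ _ _ _ _ CS x Hx) as [Hc Hxc].
  set (c := cidx K a x) in *.
  assert (Ew : wd K a c = a (S c) - a c) by (unfold wd; destruct (Nat.ltb_spec c K); lia || auto).
  assert (Pc : forall z, a c <= z < a (S c) -> psi K a sg d z = psi K a sg d (a c) + (z - a c) / (INR d * l)).
  { intros z Hz. pose proof (psi_PA F K a sg m d c CS Hc (a c) z ltac:(lra) ltac:(lra) ltac:(lra) ltac:(intros ? []))
      as E. fold l in E. unfold Rdiv. lra. }
  set (y := x + (v - u) * (INR d * l)).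
  assert (Hy : y < a (S c)).
  { destruct (Rlt_dec y (a (S c))) as [|Hge]; auto. exfalso.
    apply (Hb (psi K a sg d (a c) + wd K a c / (INR d * l))).
    - apply in_flat_map. exists c; split. apply in_seq; lia. simpl; auto.
    - rewrite <- Hpx, (Pc x Hxc), Ew. split.
      + apply Rplus_lt_compat_l. unfold Rdiv; apply Rmult_lt_compat_r. apply Rinv_0_lt_compat; lra. lra.
      + assert (a (S c) - a c <= y - a c) by lra. unfold y in H.
        assert ((a (S c) - a c) / (INR d * l) <= (x - a c) / (INR d * l) + (v - u)).
        { apply (Rmult_le_reg_r (INR d * l)); auto. unfold Rdiv.
          rewrite Rmult_plus_distr_r, !Rmult_assoc, Rinv_l by lra. lra. }
        pose proof (Pc x Hxc). lra. }
  assert (Hyx : x <= y). { unfold y. nra. }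
  assert (HXy : Xd K a sg d y).
  { assert (Cy : cidx K a y = c) by (apply (cidx_eq _ _ _ _ _ CS); auto; lra).
    split. apply (cell_range _ _ _ _ _ CS c); auto; lra. rewrite Cy; auto. }
  assert (Py : psi K a sg d y = v).
  { rewrite (Pc y) by lra. pose proof (Pc x Hxc). unfold y.
    replace ((x + (v - u) * (INR d * l) - a c) / (INR d * l)) with ((x - a c) / (INR d * l) + (v - u)) by (field; lra).
    lra. }
  assert (E : psinv K a sg d v = y).
  { rewrite <- Py. apply (psinv_psi F K a sg m); auto. }
  rewrite E. unfold y. ring.
Qed.

Lemma psinv_range F K a sg m d u : cellstr F K a sg m -> hasd K sg d -> 0 <= u < 1 -> 0 <= psinv K a sg d u < 1.
Proof. intros CS Ex Hu. apply (psinv_spec F K a sg m d u CS Ex Hu). Qed.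

Lemma psi_PA_glob F K a sg m d : cellstr F K a sg m ->
  PAI (/ (INR d * ell K a sg d)) (map a (seq 0 (S K)) ++ flat_map (fun _ => nil) (seq 0 K)) 0 1 (psi K a sg d).
Proof.
  intros CS. pose proof CS as (HK & Ha0 & Ha1 & Hinc & _).
  rewrite <- Ha0 at 1; rewrite <- Ha1. apply PA_glue; auto.
  intros i Hi; apply (psi_PA F K a sg m d i CS Hi).
Qed.

Lemma frac_rot d u : 0 <= u < 1 -> lift (rot d) u = frac_part (u + / INR d).
Proof. intros Hu. unfold lift, rot. change (proj1_sig (toT1 u)) with (v (toT1 u)). rewrite (v_toT1 u Hu). reflexivity. Qed.

Lemma psinv_rot F K a sg m d u : cellstr F K a sg m -> hasd K sg d -> 0 <= u < 1 ->
  psinv K a sg d (frac_part (u + / INR d)) = F (psinv K a sg d u).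
Proof.
  intros CS Ex Hu. destruct (psinv_spec F K a sg m d u CS Ex Hu) as [HX Hp].
  rewrite <- Hp at 1. rewrite <- (psi_conj F K a sg m d) by auto.
  apply (psinv_psi F K a sg m); auto. apply (Xd_F _ _ _ _ _ CS); auto.
Qed.
Open Scope R_scope.

Lemma comm_lift f h : (forall p, f (h p) = h (f p)) -> forall x, lift f (lift h x) = lift h (lift f x).
Proof. intros H x. unfold lift at 1 3. unfold lift. rewrite !toT1_v, H; auto. Qed.

Lemma inv_lift g h : (forall p, g (h p) = p) -> forall x, 0 <= x < 1 -> lift g (lift h x) = x.
Proof. intros H x Hx. unfold lift at 1. unfold lift. rewrite toT1_v, H. apply v_toT1; auto. Qed.

Lemma iter_comm (F H : R -> R) : (forall x, F (H x) = H (F x)) -> forall j x, Nat.iter j F (H x) = H (Nat.iter j F x).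
Proof. intros C j; induction j; intros x; simpl; auto. rewrite IHj; auto. Qed.

Lemma pres_Xd f h K a sg m d x : cellstr (lift f) K a sg m -> (forall p, f (h p) = h (f p)) ->
  (exists g, forall p, g (h p) = p) -> Xd K a sg d x -> Xd K a sg d (lift h x).
Proof.
  intros CS Hc [g Hg] HX. pose proof (proj1 HX) as Hx.
  pose proof (lift_range h x) as Hhx.
  apply (Xd_char _ _ _ _ _ CS) in HX; auto. apply (Xd_char _ _ _ _ _ CS); auto.
  assert (It : forall j, Nat.iter j (lift f) (lift h x) = lift h (Nat.iter j (lift f) x)).
  { intros j; apply iter_comm. apply comm_lift; auto. }
  assert (Inj : forall y z, 0 <= y < 1 -> 0 <= z < 1 -> lift h y = lift h z -> y = z).
  { intros y z Hy Hz E. rewrite <- (inv_lift g h Hg y Hy), <- (inv_lift g h Hg z Hz), E; auto. }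
  destruct HX as [D1 [D2 D3]]. repeat split; auto.
  - rewrite It, D2; auto.
  - intros d' H1 H2 E. rewrite It in E. apply (D3 d' H1 H2). apply Inj; auto. apply iter_lift_range; auto.
Qed.

Lemma pres_Xd_inv f h g K a sg m d x : cellstr (lift f) K a sg m -> (forall p, f (h p) = h (f p)) ->
  (forall p, g (h p) = p) -> (forall p, h (g p) = p) -> Xd K a sg d x -> Xd K a sg d (lift g x).
Proof.
  intros CS Hc Hg Hh HX. pose proof (proj1 HX) as Hx. pose proof (lift_range g x) as Hgx.
  destruct (cidx_spec _ _ _ _ _ CS _ Hgx) as [Hi _].
  assert (HX' : Xd K a sg (per sg (cidx K a (lift g x))) (lift g x)) by (split; auto).
  pose proof (pres_Xd f h K a sg m _ _ CS Hc (ex_intro _ g Hg) HX') as HX''.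
  rewrite (inv_lift h g Hh x Hx) in HX''. destruct HX as [_ E1]. destruct HX'' as [_ E2].
  split; auto. congruence.
Qed.

Definition phid K a sg d (h : T1 -> T1) : T1 -> T1 :=
  fun p => toT1 (psi K a sg d (lift h (psinv K a sg d (v p)))).

Lemma lift_phid F K a sg m d h u : cellstr F K a sg m -> hasd K sg d -> 0 <= u < 1 ->
  (forall x, Xd K a sg d x -> Xd K a sg d (lift h x)) ->
  lift (phid K a sg d h) u = psi K a sg d (lift h (psinv K a sg d u)).
Proof.
  intros CS Ex Hu Hp. unfold lift at 1, phid. rewrite (v_toT1 u Hu). apply v_toT1.
  apply (psi_range _ _ _ _ _ CS d). apply Hp. apply (psinv_spec F K a sg m d u CS Ex Hu).
Qed.

Lemma PA_s s s' L c e F : s = s' -> PAI s L c e F -> PAI s' L c e F.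
Proof. intros ->; auto. Qed.

Lemma phid_G f K a sg m d h : cellstr (lift f) K a sg m -> hasd K sg d ->
  centralizer f h -> G d (phid K a sg d h).
Proof.
  intros CS Ex [Hiet Hc]. pose proof Hiet as [[g [Hg Hh]] _].
  destruct (ell_pos_d _ _ _ _ _ _ CS Ex) as [Hl Hd].
  set (F := lift f) in *.
  assert (PH : forall x, Xd K a sg d x -> Xd K a sg d (lift h x)).
  { intros x; apply (pres_Xd f h K a sg m d x CS Hc); eauto. }
  assert (PG : forall x, Xd K a sg d x -> Xd K a sg d (lift g x)).
  { intros x; apply (pres_Xd_inv f h g K a sg m d x CS Hc); eauto. }
  assert (Sp := fun u Hu => psinv_spec F K a sg m d u CS Ex Hu).
  assert (Inv : forall h1 h2, (forall x, Xd K a sg d x -> Xd K a sg d (lift h1 x)) ->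
     (forall x, Xd K a sg d x -> Xd K a sg d (lift h2 x)) ->
     (forall x, 0 <= x < 1 -> lift h1 (lift h2 x) = x) ->
     forall p, phid K a sg d h1 (phid K a sg d h2 p) = p).
  { intros h1 h2 P1 P2 E p. apply v_inj. rewrite <- lift_v, <- (lift_v (phid K a sg d h2)).
    pose proof (v_range p) as Hp. destruct (Sp _ Hp) as [X1 X2].
    rewrite (lift_phid F K a sg m d h2) by auto. rewrite (lift_phid F K a sg m d h1); auto.
    - rewrite (psinv_psi F K a sg m d) by auto. rewrite E by (apply (proj1 X1)). auto.
    - apply (psi_range _ _ _ _ _ CS); auto. }
  assert (Bij : exists g0, (forall p, g0 (phid K a sg d h p) = p) /\ (forall p, phid K a sg d h (g0 p) = p)).
  { exists (phid K a sg d g). split; apply Inv; auto; apply inv_lift; auto. }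
  destruct (iet_PA h Hiet) as [Lh HLh].
  assert (PAc : PAI 1 ((Lt K a sg d ++ map (psi K a sg d) Lh) ++ map (fun y => psi K a sg d (lift g y))
             (map a (seq 0 (S K)) ++ flat_map (fun _ => nil) (seq 0 K))) 0 1
             (fun u => psi K a sg d (lift h (psinv K a sg d u)))).
  { apply (PA_s ((INR d * ell K a sg d * 1) * / (INR d * ell K a sg d))); [field; lra|].
    eapply (PA_comp _ _ _ _ _ _ 0 1 (fun u => lift h (psinv K a sg d u)) (psi K a sg d)).
    - nra.
    - apply (PA_comp _ _ _ _ _ _ 0 1 (psinv K a sg d) (lift h) (psi K a sg d)).
      + nra.
      + apply (psinv_PA F K a sg m d CS Ex).
      + intros x Hx. apply (psinv_range F K a sg m d x CS Ex Hx).
      + exact HLh.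
      + intros z Hz. apply Sp; auto.
    - intros x Hx. apply lift_range.
    - apply (psi_PA_glob F K a sg m d CS).
    - intros z Hz. cbv beta. rewrite (inv_lift g h Hg) by (apply (psinv_range F K a sg m d z CS Ex Hz)). apply Sp; auto. }
  assert (IET : is_iet (phid K a sg d h)).
  { apply (PA_iet _ Bij _ (PA_ext _ _ _ _ _ (lift (phid K a sg d h)) PAc ltac:(intros u Hu; symmetry; apply (lift_phid F K a sg m d h u CS Ex Hu PH)))). }
  unfold G. destruct (Nat.eqb_spec d 1); auto. split; auto.
  intros p. apply v_inj. rewrite <- !lift_v. pose proof (v_range p) as Hp.
  rewrite (lift_phid F K a sg m d h) by (auto; apply lift_range).
  rewrite (frac_rot d (v p) Hp).
  rewrite (lift_phid F K a sg m d h) by (auto; apply frac_in).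
  rewrite (psinv_rot F K a sg m d (v p) CS Ex Hp).
  rewrite frac_rot by (apply (psi_range _ _ _ _ _ CS); apply PH; apply Sp; auto).
  destruct (Sp _ Hp) as [X1 X2].
  unfold F. rewrite <- (comm_lift f h Hc). fold F.
  rewrite (psi_conj F K a sg m d _ CS (PH _ X1)). auto.
Qed.
Open Scope R_scope.

Definition Ds K sg := nodup Nat.eq_dec (map (per sg) (seq 0 K)).
Definition nsf K sg i := nth i (Ds K sg) 0%nat.

Lemma ns_has F K a sg m i : cellstr F K a sg m -> (i < length (Ds K sg))%nat -> hasd K sg (nsf K sg i).
Proof.
  intros CS Hi. pose proof (nth_In (Ds K sg) 0%nat Hi) as H. unfold Ds in H.
  apply nodup_In, in_map_iff in H as [c [E Hc]]. apply in_seq in Hc. exists c; split; [lia|auto].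
Qed.

Lemma ns_pos F K a sg m i : cellstr F K a sg m -> (i < length (Ds K sg))%nat -> (1 <= nsf K sg i)%nat.
Proof.
  intros CS Hi. destruct (ns_has F K a sg m i CS Hi) as [c [Hc E]]. rewrite <- E.
  apply (per_spec K sg m (cs_cyc _ _ _ _ _ CS) c Hc).
Qed.

Lemma ns_inj K sg i j : (i < length (Ds K sg))%nat -> (j < length (Ds K sg))%nat -> nsf K sg i = nsf K sg j -> i = j.
Proof.
  intros Hi Hj E. apply (NoDup_nth (Ds K sg) 0%nat); auto. apply NoDup_nodup.
Qed.

Lemma per_in K sg c : (c < K)%nat -> exists i, (i < length (Ds K sg))%nat /\ nsf K sg i = per sg c.
Proof.
  intros Hc. assert (H : In (per sg c) (Ds K sg)).
  { unfold Ds; apply nodup_In, in_map, in_seq; lia. }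
  apply (In_nth _ _ 0%nat) in H as [i [Hi E]]. exists i; auto.
Qed.

Definition ix K a sg x := epsilon (inhabits 0%nat) (fun i => (i < length (Ds K sg))%nat /\ nsf K sg i = per sg (cidx K a x)).

Lemma ix_spec F K a sg m x : cellstr F K a sg m -> 0 <= x < 1 ->
  (ix K a sg x < length (Ds K sg))%nat /\ Xd K a sg (nsf K sg (ix K a sg x)) x.
Proof.
  intros CS Hx. assert (H : (ix K a sg x < length (Ds K sg))%nat /\ nsf K sg (ix K a sg x) = per sg (cidx K a x)).
  { unfold ix; apply epsilon_spec. apply per_in. apply (cidx_spec _ _ _ _ _ CS x Hx). }
  destruct H; split; auto. split; auto.
Qed.

Lemma ix_eq F K a sg m i x : cellstr F K a sg m -> (i < length (Ds K sg))%nat -> Xd K a sg (nsf K sg i) x -> ix K a sg x = i.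
Proof.
  intros CS Hi HX. destruct (ix_spec F K a sg m x CS (proj1 HX)) as [H1 [_ H2]].
  apply ns_inj with K sg; auto. rewrite <- H2. exact (proj2 HX).
Qed.

Lemma phid_hom f K a sg m d h1 h2 : cellstr (lift f) K a sg m -> hasd K sg d ->
  centralizer f h1 -> centralizer f h2 ->
  phid K a sg d (fun x => h1 (h2 x)) = (fun x => phid K a sg d h1 (phid K a sg d h2 x)).
Proof.
  intros CS Ex [[[g1 [Hg1 _]] _] Hc1] [[[g2 [Hg2 _]] _] Hc2].
  assert (P1 : forall x, Xd K a sg d x -> Xd K a sg d (lift h1 x)) by (intros x; apply (pres_Xd f h1 K a sg m d x CS Hc1); eauto).
  assert (P2 : forall x, Xd K a sg d x -> Xd K a sg d (lift h2 x)) by (intros x; apply (pres_Xd f h2 K a sg m d x CS Hc2); eauto).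
  assert (P12 : forall x, Xd K a sg d x -> Xd K a sg d (lift (fun y => h1 (h2 y)) x)).
  { intros x HX. rewrite lift_comp by apply HX. auto. }
  apply fun_ext_lift. intros u Hu.
  rewrite (lift_comp (phid K a sg d h1)) by auto.
  destruct (psinv_spec (lift f) K a sg m d u CS Ex Hu) as [X1 X2].
  rewrite (lift_phid (lift f) K a sg m d _ u CS Ex Hu P12).
  rewrite (lift_phid (lift f) K a sg m d h2 u CS Ex Hu P2).
  rewrite (lift_phid (lift f) K a sg m d h1 _ CS Ex (psi_range _ _ _ _ _ CS _ _ (P2 _ X1)) P1).
  rewrite (psinv_psi (lift f) K a sg m d) by auto. rewrite lift_comp by apply X1. auto.
Qed.
Open Scope R_scope.

Definition Hh K a sg (gg : nat -> T1 -> T1) (x : R) : R :=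
  psinv K a sg (nsf K sg (ix K a sg x)) (lift (gg (ix K a sg x)) (psi K a sg (nsf K sg (ix K a sg x)) x)).
Definition hh K a sg gg : T1 -> T1 := fun p => toT1 (Hh K a sg gg (v p)).

Lemma Hh_X F K a sg m gg x : cellstr F K a sg m -> 0 <= x < 1 ->
  Xd K a sg (nsf K sg (ix K a sg x)) (Hh K a sg gg x) /\ ix K a sg (Hh K a sg gg x) = ix K a sg x.
Proof.
  intros CS Hx. destruct (ix_spec F K a sg m x CS Hx) as [H1 H2].
  assert (X : Xd K a sg (nsf K sg (ix K a sg x)) (Hh K a sg gg x)).
  { unfold Hh. apply (psinv_spec F K a sg m); auto. apply (ns_has F K a sg m); auto. apply lift_range. }
  split; auto. apply (ix_eq F K a sg m); auto.
Qed.

Lemma lift_hh F K a sg m gg x : cellstr F K a sg m -> 0 <= x < 1 -> lift (hh K a sg gg) x = Hh K a sg gg x.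
Proof.
  intros CS Hx. unfold lift, hh. rewrite (v_toT1 x Hx). apply v_toT1.
  apply (Hh_X F K a sg m gg x CS Hx).
Qed.

Lemma hh_inv F K a sg m gg gi : cellstr F K a sg m ->
  (forall i, (i < length (Ds K sg))%nat -> forall p, gi i (gg i p) = p) ->
  forall p, hh K a sg gi (hh K a sg gg p) = p.
Proof.
  intros CS Hinv p. apply v_inj. pose proof (v_range p) as Hp.
  rewrite <- lift_v, <- (lift_v (hh K a sg gg)).
  rewrite (lift_hh F K a sg m gg) by auto.
  destruct (Hh_X F K a sg m gg (v p) CS Hp) as [X1 E1].
  rewrite (lift_hh F K a sg m gi _ CS (proj1 X1)).
  destruct (ix_spec F K a sg m (v p) CS Hp) as [I1 I2].
  unfold Hh at 1. rewrite E1. unfold Hh.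
  set (i := ix K a sg (v p)) in *. set (d := nsf K sg i) in *.
  assert (Ex : hasd K sg d) by (apply (ns_has F K a sg m); auto).
  rewrite (proj2 (psinv_spec F K a sg m d _ CS Ex (lift_range _ _))).
  rewrite (inv_lift (gi i) (gg i) (Hinv i I1)) by (apply (psi_range _ _ _ _ _ CS); auto).
  apply (psinv_psi F K a sg m); auto.
Qed.

Lemma G_iet d g : G d g -> is_iet g.
Proof. unfold G. destruct (Nat.eqb d 1); auto. intros [H _]; auto. Qed.

Lemma Xd1_fix F K a sg m x : cellstr F K a sg m -> Xd K a sg 1 x -> F x = x.
Proof.
  intros CS HX. pose proof (proj1 HX) as Hx. apply (Xd_char _ _ _ _ _ CS) in HX; auto.
  destruct HX as [_ [E _]]. exact E.
Qed.

Lemma hh_comm f K a sg m gg : cellstr (lift f) K a sg m ->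
  (forall i, (i < length (Ds K sg))%nat -> G (nsf K sg i) (gg i)) ->
  forall p, f (hh K a sg gg p) = hh K a sg gg (f p).
Proof.
  intros CS HG p. set (F := lift f) in *. apply v_inj. pose proof (v_range p) as Hp.
  rewrite <- !lift_v. fold F. rewrite (lift_hh F K a sg m gg) by auto.
  assert (HF : 0 <= F (v p) < 1) by apply lift_range.
  rewrite (lift_hh F K a sg m gg) by auto.
  destruct (ix_spec F K a sg m (v p) CS Hp) as [I1 X1].
  set (i := ix K a sg (v p)) in *. set (d := nsf K sg i) in *.
  assert (XF : Xd K a sg d (F (v p))) by (apply (Xd_F _ _ _ _ _ CS); auto).
  assert (IF : ix K a sg (F (v p)) = i) by (apply (ix_eq F K a sg m); auto).
  destruct (Hh_X F K a sg m gg (v p) CS Hp) as [X2 E2]. fold i d in X2.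
  assert (Ex : hasd K sg d) by (apply (ns_has F K a sg m); auto).
  pose proof (HG i I1) as Gi. fold d in Gi. unfold G in Gi.
  destruct (Nat.eqb_spec d 1) as [e|n].
  - rewrite e in X1, X2. rewrite (Xd1_fix F K a sg m _ CS X2), (Xd1_fix F K a sg m _ CS X1). auto.
  - destruct Gi as [_ Gc].
    unfold Hh. rewrite IF. fold i d.
    rewrite (psi_conj F K a sg m d _ CS X1).
    pose proof (psi_range _ _ _ _ _ CS d _ X1) as R1.
    rewrite <- (frac_rot d _ R1). rewrite <- (comm_lift _ _ Gc). rewrite frac_rot by apply lift_range.
    rewrite (psinv_rot F K a sg m d) by (auto; apply lift_range). auto.
Qed.

Lemma hh_PA F K a sg m gg gi : cellstr F K a sg m ->
  (forall i, (i < length (Ds K sg))%nat -> is_iet (gg i)) ->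
  (forall i, (i < length (Ds K sg))%nat -> forall p, gi i (gg i p) = p) ->
  exists L, PAI 1 L 0 1 (Hh K a sg gg).
Proof.
  intros CS Hiet Hinv.
  set (Lg := fun i => epsilon (inhabits nil) (fun L => PAI 1 L 0 1 (lift (gg i)))).
  assert (HLg : forall i, (i < length (Ds K sg))%nat -> PAI 1 (Lg i) 0 1 (lift (gg i))).
  { intros i Hi. unfold Lg; apply epsilon_spec. apply iet_PA; auto. }
  pose proof CS as (HK & Ha0 & Ha1 & Hinc & _).
  set (Ls := fun c => let i := ix K a sg (a c) in let d := nsf K sg i in
     (nil ++ map (psinv K a sg d) (Lg i)) ++ map (fun y => psinv K a sg d (lift (gi i) y)) (Lt K a sg d)).
  exists (map a (seq 0 (S K)) ++ flat_map Ls (seq 0 K)).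
  enough (G0 : forall c, (c < K)%nat -> PAI 1 (Ls c) (a c) (a (S c)) (Hh K a sg gg)).
  { pose proof (PA_glue 1 K a Ls _ Hinc G0) as G1. rewrite Ha0, Ha1 in G1. exact G1. }
  intros c Hc.
  assert (Hac : a c <= a c < a (S c)) by (pose proof (Hinc c Hc); lra).
  pose proof (cell_range _ _ _ _ _ CS c (a c) Hc Hac) as Ha.
  destruct (ix_spec F K a sg m (a c) CS Ha) as [I1 X1].
  unfold Ls. set (i := ix K a sg (a c)) in *. set (d := nsf K sg i) in *.
  assert (Ex : hasd K sg d) by (apply (ns_has F K a sg m); auto).
  destruct (ell_pos_d _ _ _ _ _ _ CS Ex) as [Hl Hd].
  assert (Xz : forall z, a c <= z < a (S c) -> Xd K a sg d z /\ ix K a sg z = i).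
  { intros z Hz. assert (Xz : Xd K a sg d z).
    { split. apply (cell_range _ _ _ _ _ CS c); auto.
      rewrite (cidx_eq _ _ _ _ _ CS z c Hc Hz). rewrite <- (cidx_eq _ _ _ _ _ CS (a c) c Hc Hac). apply X1. }
    split; auto. apply (ix_eq F K a sg m); auto. }
  apply (PA_ext _ _ _ _ (fun z => psinv K a sg d (lift (gg i) (psi K a sg d z)))).
  2:{ intros z Hz. unfold Hh. destruct (Xz z Hz) as [_ ->]. auto. }
  assert (Es : (/ (INR d * ell K a sg d) * 1) * (INR d * ell K a sg d) = 1) by (field; nra).
  apply (PA_s _ _ _ _ _ _ Es).
  apply (PA_comp _ _ _ _ _ _ 0 1 (fun z => lift (gg i) (psi K a sg d z)) (psinv K a sg d)).
  - assert (0 < / (INR d * ell K a sg d)) by (apply Rinv_0_lt_compat; nra). nra.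
  - apply (PA_comp _ _ _ _ _ _ 0 1 (psi K a sg d) (lift (gg i)) (psinv K a sg d)).
    + apply Rinv_0_lt_compat; nra.
    + apply (psi_PA F K a sg m d c CS Hc).
    + intros x Hx. apply (psi_range _ _ _ _ _ CS). apply Xz; auto.
    + apply HLg; auto.
    + intros z Hz. apply (psinv_psi F K a sg m); auto. apply Xz; auto.
  - intros x Hx. apply lift_range.
  - apply (psinv_PA F K a sg m d CS Ex).
  - intros z Hz. cbv beta. rewrite (inv_lift (gi i) (gg i) (Hinv i I1)) by (apply (psi_range _ _ _ _ _ CS); apply Xz; auto).
    apply (psinv_psi F K a sg m); auto. apply Xz; auto.
Qed.
Open Scope R_scope.

Theorem corollary5p6 (f : T1 -> T1) :
  is_iet f -> finite_order f ->
  exists (k : nat) (ns : nat -> nat) (phi : (T1 -> T1) -> nat -> (T1 -> T1)),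
    (forall i, (i < k)%nat -> (1 <= ns i)%nat) /\
    (forall h, centralizer f h -> forall i, (i < k)%nat -> G (ns i) (phi h i)) /\
    (forall h1 h2, centralizer f h1 -> centralizer f h2 ->
        (forall i, (i < k)%nat -> phi h1 i = phi h2 i) -> h1 = h2) /\
    (forall g : nat -> T1 -> T1, (forall i, (i < k)%nat -> G (ns i) (g i)) ->
        exists h, centralizer f h /\ forall i, (i < k)%nat -> phi h i = g i) /\
    (forall h1 h2, centralizer f h1 -> centralizer f h2 ->
        forall i, (i < k)%nat ->
          phi (fun x => h1 (h2 x)) i = (fun x => phi h1 i (phi h2 i x))).
Proof.
  intros Hf Hfo. destruct (cell_structure f Hf Hfo) as [K [a [sg [m CS]]]].
  set (F := lift f) in *.
  exists (length (Ds K sg)), (nsf K sg), (fun h i => phid K a sg (nsf K sg i) h).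
  split; [|split; [|split; [|split]]].
  - intros i Hi; apply (ns_pos F K a sg m); auto.
  - intros h Hh i Hi. apply (phid_G f K a sg m); auto. apply (ns_has F K a sg m); auto.
  - intros h1 h2 [[[g1 [Hg1 _]] _] Hc1] [[[g2 [Hg2 _]] _] Hc2] E.
    apply fun_ext_lift. intros x Hx.
    destruct (ix_spec F K a sg m x CS Hx) as [I1 X1].
    set (i := ix K a sg x) in *. set (d := nsf K sg i) in *.
    assert (Ex : hasd K sg d) by (apply (ns_has F K a sg m); auto).
    assert (P1 : forall x, Xd K a sg d x -> Xd K a sg d (lift h1 x)) by (intros y; apply (pres_Xd f h1 K a sg m d y CS Hc1); eauto).
    assert (P2 : forall x, Xd K a sg d x -> Xd K a sg d (lift h2 x)) by (intros y; apply (pres_Xd f h2 K a sg m d y CS Hc2); eauto).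
    pose proof (E i I1) as Ei. fold d in Ei.
    pose proof (psi_range _ _ _ _ _ CS d x X1) as R.
    assert (Q : lift (phid K a sg d h1) (psi K a sg d x) = lift (phid K a sg d h2) (psi K a sg d x)) by (rewrite Ei; auto).
    rewrite (lift_phid F K a sg m d h1 _ CS Ex R P1), (lift_phid F K a sg m d h2 _ CS Ex R P2) in Q.
    rewrite (psinv_psi F K a sg m d x CS Ex X1) in Q.
    apply (psi_inj F K a sg m d); auto.
  - intros g HG.
    set (k := length (Ds K sg)) in *.
    set (gi := fun i => epsilon (inhabits (fun p : T1 => p)) (fun g' => (forall p, g' (g i p) = p) /\ (forall p, g i (g' p) = p))).
    assert (Hgi : forall i, (i < k)%nat -> (forall p, gi i (g i p) = p) /\ (forall p, g i (gi i p) = p)).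
    { intros i Hi. exact (epsilon_spec (inhabits (fun p : T1 => p)) (fun g' => (forall p, g' (g i p) = p) /\ (forall p, g i (g' p) = p)) (proj1 (G_iet _ _ (HG i Hi)))). }
    exists (hh K a sg g). split; [split|].
    + destruct (hh_PA F K a sg m g gi CS (fun i Hi => G_iet _ _ (HG i Hi)) (fun i Hi => proj1 (Hgi i Hi))) as [L HL].
      apply (PA_iet _ (ex_intro _ (hh K a sg gi) (conj (hh_inv F K a sg m g gi CS (fun i Hi => proj1 (Hgi i Hi)))
                                                    (hh_inv F K a sg m gi g CS (fun i Hi => proj2 (Hgi i Hi))))) L).
      apply (PA_ext _ _ _ _ _ _ HL). intros x Hx. symmetry. apply (lift_hh F K a sg m); auto.
    + apply (hh_comm f K a sg m); auto.
    + intros i Hi. set (d := nsf K sg i).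
      assert (Ex : hasd K sg d) by (apply (ns_has F K a sg m); auto).
      assert (PH : forall x, Xd K a sg d x -> Xd K a sg d (lift (hh K a sg g) x)).
      { intros x HX. rewrite (lift_hh F K a sg m g x CS (proj1 HX)).
        destruct (Hh_X F K a sg m g x CS (proj1 HX)) as [X2 _].
        rewrite (ix_eq F K a sg m i x CS Hi HX) in X2. auto. }
      apply fun_ext_lift. intros u Hu.
      rewrite (lift_phid F K a sg m d _ u CS Ex Hu PH).
      destruct (psinv_spec F K a sg m d u CS Ex Hu) as [X1 E1].
      rewrite (lift_hh F K a sg m g _ CS (proj1 X1)).
      unfold Hh. rewrite (ix_eq F K a sg m i _ CS Hi X1). fold d. rewrite E1.
      apply (psinv_spec F K a sg m d _ CS Ex (lift_range _ _)).
  - intros h1 h2 H1 H2 i Hi. apply (phid_hom f K a sg m); auto. apply (ns_has F K a sg m); auto.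
Qed.
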